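(* For every integer $a \ge 3$, every $b \in \mathbb{N}$ and every cycle graph $C_a$ of order $a$, $R_\mathrm{ord}(C_a, P_b^\mathrm{mon}) = 1 + (a-1)(b-1)$.
   Context: All graphs are finite, simple and undirected, and a graph of order $n$ has vertex set $\{0,1,\ldots,n-1\}$; $K_n$ is the complete graph on $\{0,\ldots,n-1\}$. A cycle graph of order $a$ is any graph on $\{0,\ldots,a-1\}$ whose edges form a single Hamiltonian cycle (in any vertex order). A $2$-edge-coloring of $K_n$ assigns each edge a color in $\{1,2\}$. An increasing embedding of $H$ in color $j$ is an injective map $\varphi\colon V(H)\to V(K_n)$ with $\varphi(0)<\cdots<\varphi(|H|-1)$ such that every edge $uv$ of $H$ goes to an edge $\{\varphi(u),\varphi(v)\}$ of color $j$. $R_\mathrm{ord}(H_1,H_2)$ is the smallest $n$ such that every $2$-edge-coloring of $K_n$ admits an increasing embedding of $H_1$ in color $1$ or of $H_2$ in color $2$. The monotone path $P_n^\mathrm{mon}$ has edges $\{i,i+1\}$, $0\le i\le n-2$. *)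

(* Defs.v *)
From mathcomp Require Import all_boot fingroup perm.
Set Implicit Arguments. Unset Strict Implicit. Unset Printing Implicit Defensive.

(* A graph of order m: a (symmetric, irreflexive) edge relation on 'I_m = {0,..,m-1}. *)
Definition graph (m : nat) := rel 'I_m.

(* A cycle graph of order a: the edges form one Hamiltonian cycle
   s 0 - s 1 - ... - s (a-1) - s 0, for some vertex ordering s. *)
Definition is_cycle_graph (a : nat) (E : graph a) : Prop :=
  exists s : {perm 'I_a}, forall u v : 'I_a,
    E u v = [exists i : 'I_a,
               ((u == s i) && (v == s (ordS i))) || ((v == s i) && (u == s (ordS i)))].

Definition Pmon (b : nat) : graph b :=
  fun u v => (val v == (val u).+1) || (val u == (val v).+1).
Arguments Pmon b : clear implicits.

(* A 2-edge-colouring of K_n: colour c i j in {1,2} for every edge {i,j}, i <> j,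
   symmetric (the value on the diagonal is irrelevant). *)
Definition is_2coloring (n : nat) (c : 'I_n -> 'I_n -> nat) : Prop :=
  forall i j : 'I_n, i != j -> c i j = c j i /\ (c i j = 1 \/ c i j = 2).

Definition incr_embedding (m n : nat) (H : graph m) (c : 'I_n -> 'I_n -> nat)
    (col : nat) : Prop :=
  exists phi : 'I_m -> 'I_n,
    (forall u v : 'I_m, val u < val v -> val (phi u) < val (phi v)) /\
    (forall u v : 'I_m, H u v -> c (phi u) (phi v) = col).

Definition ord_ramsey_prop (m1 m2 : nat) (H1 : graph m1) (H2 : graph m2) (n : nat) : Prop :=
  forall c : 'I_n -> 'I_n -> nat, is_2coloring c ->
    incr_embedding H1 c 1 \/ incr_embedding H2 c 2.

Definition is_Rord (m1 m2 : nat) (H1 : graph m1) (H2 : graph m2) (N : nat) : Prop :=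
  ord_ramsey_prop H1 H2 N /\ (forall n, n < N -> ~ ord_ramsey_prop H1 H2 n).

(* Main.v *)
Require Import Defs.
From mathcomp Require Import all_boot fingroup perm.
From mathcomp Require Import zify.

Fixpoint hh (cc : nat -> nat -> nat) (k v : nat) {struct k} : nat :=
  match k with 0 => 0 | k'.+1 => (\max_(u < v | cc u v == 2) hh cc k' u).+1 end.

Lemma hh_stable cc k k' v : v < k -> v < k' -> hh cc k v = hh cc k' v.
Proof.
elim: k k' v => [|k IH] [|k'] v //= Hk Hk'.
congr _.+1; apply: eq_bigr => u _; apply: IH.
  by apply: leq_trans (ltn_ord u) _; rewrite -ltnS.
by apply: leq_trans (ltn_ord u) _; rewrite -ltnS.
Qed.

Definition ff cc v := hh cc v.+1 v.

Lemma ffE cc v : ff cc v = (\max_(u < v | cc u v == 2) ff cc u).+1.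
Proof.
rewrite /ff /=; congr _.+1; apply: eq_bigr => u _; exact: (hh_stable cc v u.+1 u (ltn_ord u) (ltnSn _)).
Qed.

Lemma ff_lt cc u v : u < v -> cc u v = 2 -> ff cc u < ff cc v.
Proof.
move=> Huv Hc; rewrite (ffE cc v) ltnS.
exact: (@leq_bigmax_cond _ (fun i : 'I_v => cc i v == 2) (fun i : 'I_v => ff cc i) (Ordinal Huv)) (introT eqP Hc).
Qed.

Lemma ff_path cc m v : m < ff cc v -> exists p : nat -> nat, p m = v /\
  forall i, i < m -> p i < p i.+1 /\ cc (p i) (p i.+1) = 2.
Proof.
elim: m v => [|m IH] v Hm.
  by exists (fun _ => v).
case: (boolP [exists u : 'I_v, (cc u v == 2) && (m < ff cc u)]).
  case/existsP => u /andP [/eqP Hc Hu].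
  have [p [Hp1 Hp2]] := IH _ Hu.
  exists (fun i => if i == m.+1 then v else p i); split; first by rewrite eqxx.
  move=> i Hi; rewrite (ltn_eqF Hi) eqSS.
  case: eqP => [->|/eqP Him]; first by rewrite Hp1; split => //; exact: ltn_ord u.
  have: i < m by rewrite ltn_neqAle Him -ltnS.
  exact: Hp2.
move/existsPn => H; exfalso; move: Hm; rewrite ffE ltnS => Hm.
have: \max_(u < v | cc u v == 2) ff cc u <= m.
  apply/bigmax_leqP => u Hu; move: (H u); rewrite Hu /= -leqNgt; done.
by rewrite leqNgt Hm.
Qed.

Lemma mono_nat (p : nat -> nat) m : (forall i, i < m -> p i < p i.+1) ->
  forall i j, i < j -> j <= m -> p i < p j.
Proof.
move=> Hp i; elim=> [//|j IH] Hij Hj.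
move: Hij; rewrite ltnS leq_eqVlt => /orP [/eqP ->|Hij]; first exact: Hp.
exact: ltn_trans (IH Hij (ltnW Hj)) (Hp _ Hj).
Qed.

Lemma pigeon (g : nat -> nat) m s : (forall x, x \in s -> g x < m) ->
  size s <= \sum_(k < m) count (fun x => g x == k) s.
Proof.
elim: s => [|x s IH] Hs /=; first exact: leq0n.
rewrite big_split /= -add1n leq_add //.
  have Hx : g x < m by apply: Hs; rewrite inE eqxx.
  by rewrite (bigD1 (Ordinal Hx)) //= eqxx.
by apply: IH => y Hy; apply: Hs; rewrite inE Hy orbT.
Qed.

Lemma upper (a b n' : nat) (H : graph a) (c : 'I_n'.+1 -> 'I_n'.+1 -> nat) :
  1 <= b -> (a-1)*(b-1) <= n' -> is_2coloring c -> (forall u, ~~ H u u) ->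
  incr_embedding H c 1 \/ incr_embedding (Pmon b) c 2.
Proof.
move=> Hb Hn Hc Hirr.
pose cc x y := c (inord x) (inord y).
have ccS : forall x y, x < n'.+1 -> y < n'.+1 -> x != y ->
    cc x y = cc y x /\ (cc x y = 1 \/ cc x y = 2).
  move=> x y Hx Hy Hxy; apply: Hc; apply: contra Hxy => /eqP E.
  by apply/eqP; move: (congr1 val E); rewrite /= !inordK.
pose f := ff cc.
case: (boolP [exists v : 'I_n'.+1, b <= f v]).
- case/existsP => v Hv; right.
  have Hbv : b.-1 < f v by rewrite prednK.
  have [p [Hp1 Hp2]] := @ff_path cc _ _ Hbv.
  have Hmono : forall i j, i < j -> j <= b.-1 -> p i < p j.
    by apply: mono_nat => i Hi; exact: (Hp2 i Hi).1.
  have Hle : forall i, i <= b.-1 -> p i < n'.+1.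
    move=> i; rewrite leq_eqVlt => /orP [/eqP->|Hi]; first by rewrite Hp1 ltn_ord.
    by apply: ltn_trans (Hmono _ _ Hi (leqnn _)) _; rewrite Hp1.
  have Hib : forall i : 'I_b, i <= b.-1 by move=> i; rewrite -ltnS (prednK Hb).
  exists (fun i : 'I_b => inord (p i)); split.
    move=> u v' Huv /=; rewrite !inordK ?Hle ?Hib //; exact: Hmono.
  move=> u v' /orP [/eqP E | /eqP E].
    have Hu : u < b.-1. have H1 : (val u).+1 < b by rewrite -E ltn_ord. by rewrite -ltnS prednK.
    rewrite E; exact: (Hp2 u Hu).2.
  have Hu : v' < b.-1. have H1 : (val v').+1 < b by rewrite -E ltn_ord. by rewrite -ltnS prednK.
  rewrite E.
  have Hneq : p v'.+1 != p v' by rewrite gtn_eqF // (Hp2 v' Hu).1.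
  have [E2 _] := ccS (p v'.+1) (p v') (Hle _ Hu) (Hle _ (Hib v')) Hneq.
  change (cc (p v'.+1) (p v') = 2); rewrite E2.
  exact: (Hp2 v' Hu).2.
- move/existsPn => Hf; left.
  have Hf1 : forall v, 0 < f v by move=> v; rewrite /f ffE.
  have Hb2 : 1 < b by have := Hf ord0; rewrite -ltnNge => H0; apply: leq_ltn_trans (Hf1 0) H0.
  pose g x := (f x).-1.
  pose s := iota 0 n'.+1.
  have Hg : forall x, x \in s -> g x < b.-1.
    move=> x; rewrite mem_iota add0n /= => Hx.
    have := Hf (Ordinal Hx); rewrite -ltnNge /= => Hx2.
    have := Hf1 x; rewrite /g; lia.
  have [k Hk] : exists k : 'I_b.-1, a <= count (fun x => g x == k) s.
    case: (boolP [exists k : 'I_b.-1, a <= count (fun x => g x == k) s]) => [/existsP//|/existsPn Hk].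
    exfalso.
    have H1 := @pigeon g _ _ Hg; rewrite size_iota in H1.
    have : \sum_(k < b.-1) count (fun x => g x == k) s <= \sum_(k < b.-1) a.-1.
      apply: leq_sum => k _; have := Hk k; rewrite -ltnNge; lia.
    rewrite sum_nat_const card_ord => H2.
    have H3 := leq_trans H1 H2.
    move: Hn H3; rewrite -!subn1; nia.
  pose t := filter (fun x => g x == k) s.
  have Ht : a <= size t by rewrite size_filter.
  have Hst : sorted ltn t := sorted_filter ltn_trans _ (iota_ltn_sorted 0 n'.+1).
  have Htn : forall i, i < size t -> nth 0 t i < n'.+1 /\ g (nth 0 t i) = k.
    move=> i Hi; have := mem_nth 0 Hi; rewrite mem_filter mem_iota add0n.
    by case/andP => /eqP -> /andP [_ ->].
  have Hmon := sorted_ltn_nth ltn_trans 0 Hst.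
  have Hia : forall i : 'I_a, i < size t := fun i => leq_trans (ltn_ord i) Ht.
  have key : forall x y, x < y -> y < n'.+1 -> g x = g y -> cc x y = 1.
    move=> x y Hxy Hy Hgxy.
    have [_ [//|H2]] := ccS x y (ltn_trans Hxy Hy) Hy (negbT (ltn_eqF Hxy)).
    have := @ff_lt cc _ _ Hxy H2; have := Hf1 x; have := Hf1 y; move: Hgxy; rewrite /g /f; lia.
  exists (fun i : 'I_a => inord (nth 0 t i)); split.
    move=> u v Huv /=; rewrite !inordK ?(Htn _ (Hia _)).1 //.
    by apply: Hmon => //; rewrite inE Hia.
  move=> u v Huv.
  have Hneq : u != v by apply: contraNneq (Hirr u) => E; rewrite {2}E.
  have [Hu1 Hu2] := Htn _ (Hia u); have [Hv1 Hv2] := Htn _ (Hia v).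
  have Hmuv : forall u v : 'I_a, u < v -> nth 0 t u < nth 0 t v.
    by move=> u' v' H'; apply: Hmon => //; rewrite inE Hia.
  have Hneq' : val u != val v by [].
  move: Hneq'; rewrite neq_ltn => /orP [Huv'|Hvu'].
    by apply: key => //; [exact: Hmuv | rewrite Hu2 Hv2].
  have [E2 _] := ccS _ _ Hu1 Hv1 (negbT (gtn_eqF (Hmuv _ _ Hvu'))).
  change (cc (nth 0 t u) (nth 0 t v) = 1); rewrite E2.
  by apply: key => //; [exact: Hmuv | rewrite Hu2 Hv2].
Qed.

Lemma lower (a b n : nat) (C : graph a) : 3 <= a -> 1 <= b -> is_cycle_graph C ->
  n <= (a-1)*(b-1) -> ~ ord_ramsey_prop C (Pmon b) n.
Proof.
case: a C => [//|a'] C Ha; case: b => [//|b'] Hb [s Hs] Hn Hp.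
pose d := a'.+1 - 1.
have Hd : 0 < d by rewrite /d; lia.
pose c := fun i j : 'I_n => if i %/ d == j %/ d then 1 else 2.
have Hc : is_2coloring c.
  move=> i j _; split; first by rewrite /c eq_sym.
  by rewrite /c; case: ifP; auto.
case: (Hp c Hc) => [[phi [Hinc Hcol]] | [phi [Hinc Hcol]]].
- have Hblk : forall j (Hj : j < a'.+1), phi (s (Ordinal Hj)) %/ d = phi (s ord0) %/ d.
    elim=> [|j IH] Hj; first by congr (_ %/ _); congr (nat_of_ord (phi (s _))); apply: val_inj.
    have Hj' : j < a'.+1 by apply: ltnW.
    have E : ordS (Ordinal Hj') = Ordinal Hj by apply: val_inj; rewrite /= modn_small.
    have HC : C (s (Ordinal Hj')) (s (ordS (Ordinal Hj'))).
      by rewrite Hs; apply/existsP; exists (Ordinal Hj'); rewrite !eqxx.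
    have := Hcol _ _ HC; rewrite E /c; case: eqP => [<- _|_ //]; exact: IH.
  have Hall : forall u, phi u %/ d = phi (s ord0) %/ d.
    move=> u; have := Hblk _ (ltn_ord (s^-1 u)%g).
    have -> : Ordinal (ltn_ord (s^-1 u)%g) = (s^-1 u)%g by apply: val_inj.
    by rewrite permKV.
  have Hinc2 : forall j (Hj : j < a'.+1), phi ord0 + j <= phi (Ordinal Hj).
    elim=> [|j IH] Hj; first by rewrite addn0; apply: eq_leq; congr (nat_of_ord (phi _)); apply: val_inj.
    have Hj' : j < a'.+1 by apply: ltnW.
    have H' : nat_of_ord (phi (Ordinal Hj')) < nat_of_ord (phi (Ordinal Hj)) := Hinc (Ordinal Hj') (Ordinal Hj) (ltnSn _).
    have := IH Hj'; lia.
  have H1 := Hinc2 _ (ltnSn a').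
  have H2 := Hall (Ordinal (ltnSn a')).
  have H3 := Hall ord0.
  set x := nat_of_ord (phi ord0) in H1 H3.
  set y := nat_of_ord (phi (Ordinal (ltnSn a'))) in H1 H2.
  set q := phi (s ord0) %/ d in H2 H3.
  have Hx := divn_eq x d; have Hy := divn_eq y d.
  have Hxm := ltn_pmod x Hd; have Hym := ltn_pmod y Hd.
  rewrite H3 in Hx; rewrite H2 in Hy.
  have Hdd : d = a' by rewrite /d subn1.
  move: H1 Hx Hy Hxm Hym; rewrite Hdd; nia.
- have Hpb : forall j (Hj : j < b'.+1), j <= phi (Ordinal Hj) %/ d.
    elim=> [|j IH] Hj; first by [].
    have Hj' : j < b'.+1 by apply: ltnW.
    have HP : Pmon b'.+1 (Ordinal Hj') (Ordinal Hj) by rewrite /Pmon /= eqxx.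
    have H' : nat_of_ord (phi (Ordinal Hj')) < nat_of_ord (phi (Ordinal Hj)) := Hinc (Ordinal Hj') (Ordinal Hj) (ltnSn _).
    have := Hcol _ _ HP; rewrite /c; case: eqP => // Hne _.
    have Hle := leq_div2r d (ltnW H').
    have := IH Hj'; move: Hle Hne; lia.
  have H1 := Hpb _ (ltnSn b').
  have H2 : phi (Ordinal (ltnSn b')) %/ d < b'.
    rewrite ltn_divLR //; apply: leq_trans (ltn_ord _) _; apply: leq_trans Hn _.
    by rewrite /d !subn1 /= mulnC.
  by move: H1 H2; rewrite leqNgt => /negP.
Qed.

Lemma cyc_irr (a : nat) (C : graph a) : 3 <= a -> is_cycle_graph C -> forall u, ~~ C u u.
Proof.
move=> Ha [s Hs] u; rewrite Hs; apply/existsPn => i.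
have Hi : ordS i != i.
  apply/eqP => /(congr1 val) /=.
  case: (ltngtP i.+1 a) => H.
  - by rewrite modn_small // => /eqP; rewrite (gtn_eqF (ltnSn i)).
  - by have := ltn_ord i; lia.
  - by rewrite H modnn => E; move: Ha; rewrite -H -E.
have Hs' : s i != s (ordS i) by rewrite (inj_eq perm_inj) eq_sym.
apply/negP => /orP [] /andP [/eqP E1 /eqP E2]; by move: Hs'; rewrite -E1 -E2 eqxx.
Qed.

Theorem corollary4p3 (a b : nat) (C : graph a) :
  3 <= a -> 1 <= b -> is_cycle_graph C ->
  is_Rord C (Pmon b) (1 + (a - 1) * (b - 1)).
Proof.
move=> Ha Hb HC; split.
  move=> c Hc; apply: (@upper a b ((a - 1) * (b - 1)) C c) => //.
  exact: cyc_irr.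
move=> n Hn; apply: lower => //; by rewrite add1n ltnS in Hn.
Qed.
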